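(* Let $x=(x_n)_{n\in\mathbb{Z}}$ be an integer-valued sequence. For every $i\in\mathbb{Z}$, the set of descendants of $R_x(i)$ in the record graph of $x$ contains $\{j\in\mathbb{Z}: i\le j\le R_x(i)\}$.
   Context: The record map is $R_x(i)=\inf\{n>i: \sum_{l=i}^{n-1}x_l\ge0\}$ if this set is nonempty, and $R_x(i)=i$ otherwise; the record graph has vertex set $\mathbb{Z}$ and directed edges $i\to R_x(i)$ for $R_x(i)\neq i$. The set of descendants of $v$ is $D(v)=\{v\}\cup\{j\ne v: R_x^n(j)=v\text{ for some }n\ge1\}$. *)

(* Defs.v *)
From Stdlib Require Import ZArith Lia ClassicalEpsilon.
Open Scope Z_scope.

(* psum x i n = sum_{l=i}^{n-1} x l  (for n > i; 0 if n <= i) *)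
Definition psum (x : Z -> Z) (i n : Z) : Z :=
  List.fold_right Z.add 0
    (List.map (fun k : nat => x (i + Z.of_nat k)) (List.seq 0 (Z.to_nat (n - i)))).

Definition is_record_value (x : Z -> Z) (i r : Z) : Prop :=
  (i < r /\ 0 <= psum x i r /\ (forall n, i < n < r -> psum x i n < 0))
  \/ ((forall n, i < n -> psum x i n < 0) /\ r = i).

Lemma record_value_exists (x : Z -> Z) (i : Z) : exists r, is_record_value x i r.
Proof.
  destruct (classic (exists n, i < n /\ 0 <= psum x i n)) as [[n [Hn Hs]]|H].
  -
    assert (Hgen : forall k : nat, forall m, m = i + Z.of_nat k -> i < m ->
              0 <= psum x i m -> exists r, is_record_value x i r).
    { intro k. induction k as [k IH] using (well_founded_induction lt_wf).
      intros m Hm Him Hsm.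
      destruct (classic (exists n', i < n' < m /\ 0 <= psum x i n')) as [[n' [Hn' Hs']]|Hno].
      + apply (IH (Z.to_nat (n' - i))) with (m := n'); try lia; auto.
      + exists m. left. split; [lia|split; [assumption|]].
        intros n' Hn'. destruct (Z_lt_le_dec (psum x i n') 0) as [h|h]; auto.
        exfalso. apply Hno. exists n'. auto. }
    apply (Hgen (Z.to_nat (n - i)) n); lia || auto.
  - exists i. right. split; [|reflexivity].
    intros n Hn. destruct (Z_lt_le_dec (psum x i n) 0) as [h|h]; auto.
    exfalso. apply H. exists n. auto.
Qed.

Definition R (x : Z -> Z) (i : Z) : Z :=
  proj1_sig (constructive_indefinite_description _ (record_value_exists x i)).

Lemma R_spec (x : Z -> Z) (i : Z) : is_record_value x i (R x i).
Proof. unfold R. exact (proj2_sig (constructive_indefinite_description _ _)). Qed.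

Fixpoint Riter (x : Z -> Z) (n : nat) (j : Z) : Z :=
  match n with O => j | S n' => R x (Riter x n' j) end.

Definition descendants (x : Z -> Z) (v : Z) : Z -> Prop :=
  fun j => j = v \/ (j <> v /\ exists n : nat, (1 <= n)%nat /\ Riter x n j = v).

(* Main.v *)
Require Import Defs.
From Stdlib Require Import ZArith Lia List.
Open Scope Z_scope.

Lemma psum_nil x i n : n <= i -> psum x i n = 0.
Proof. intros. unfold psum. replace (Z.to_nat (n - i)) with 0%nat by lia. reflexivity. Qed.

Lemma psum_left x i n : i < n -> psum x i n = x i + psum x (i+1) n.
Proof.
  intros H. unfold psum.
  replace (Z.to_nat (n - i)) with (S (Z.to_nat (n - (i+1)))) by lia.
  simpl. rewrite <- seq_shift. rewrite map_map. f_equal; [f_equal; lia|].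
  f_equal. apply map_ext. intros a. f_equal. lia.
Qed.

Lemma psum_add x : forall (k : nat) i j n, j = i + Z.of_nat k -> j <= n ->
  psum x i n = psum x i j + psum x j n.
Proof.
  induction k; intros i j n Hj Hn.
  - subst. rewrite (psum_nil x i (i + Z.of_nat 0)) by lia. replace (i + Z.of_nat 0) with i by lia. lia.
  - rewrite (psum_left x i n) by lia. rewrite (psum_left x i j) by lia.
    rewrite (IHk (i+1) j n) by lia. lia.
Qed.

Lemma Riter_S x : forall n j, Riter x (S n) j = Riter x n (R x j).
Proof. induction n; intros; simpl in *; auto. rewrite <- IHn. reflexivity. Qed.

Theorem lemma2p17 (x : Z -> Z) (i : Z) :
  forall j : Z, i <= j <= R x i -> descendants x (R x i) j.
Proof.
  intros j Hj. set (r := R x i) in *.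
  destruct (Z.eq_dec j r) as [E|E]; [left; exact E|].
  right. split; [exact E|].
  destruct (R_spec x i) as [[Hir [Hpr Hneg]]|[_ Hri]]; [|fold r in Hri; lia].
  fold r in Hir, Hpr, Hneg.
  assert (Step : forall j, i <= j < r -> j < R x j <= r).
  { intros j' Hj'.
    assert (Hpj : 0 <= psum x j' r).
    { rewrite (psum_add x (Z.to_nat (j' - i)) i j' r) in Hpr by lia.
      destruct (Z.eq_dec j' i).
      - subst. rewrite psum_nil in Hpr by lia. lia.
      - specialize (Hneg j' ltac:(lia)). lia. }
    destruct (R_spec x j') as [[A [_ C]]|[A _]].
    - split; [lia|]. destruct (Z_le_gt_dec (R x j') r); auto.
      specialize (C r ltac:(lia)). lia.
    - specialize (A r ltac:(lia)). lia. }
  assert (Main : forall k : nat, forall j, j = r - Z.of_nat k -> i <= j < r ->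
            exists n : nat, (1 <= n)%nat /\ Riter x n j = r).
  { intro k. induction k as [k IH] using (well_founded_induction lt_wf).
    intros j' Hk Hj'. destruct (Step j' Hj') as [S1 S2].
    destruct (Z.eq_dec (R x j') r) as [E'|E'].
    - exists 1%nat. split; [lia|]. simpl. exact E'.
    - destruct (IH (Z.to_nat (r - R x j')) ltac:(lia) (R x j') ltac:(lia) ltac:(lia))
        as [n [Hn1 Hn2]].
      exists (S n). split; [lia|]. rewrite Riter_S. exact Hn2. }
  apply (Main (Z.to_nat (r - j))); lia.
Qed.
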